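(* Suppose $r>2$, $0<\beta<1$ and $r^2<\frac{(1+\beta)^2}{\beta}$. Then $$\frac{1}{r^{1+\beta}}\frac{(1+\beta)^{1+\beta}}{\beta^\beta}<\left(\frac2r\right)^{1+\beta}\left(\frac4{r^2}\right)^{-\beta}\left(\sqrt{1-\frac4{r^2}}+1\right)^{\beta-1}=\left(\frac r2-\sqrt{\frac{r^2}{4}-1}\right)^{1-\beta}.$$ *)

(* Defs.v *)
From Stdlib Require Import Reals.

(* Main.v *)
Require Import Defs.
From Stdlib Require Import Reals.
From Stdlib Require Import Lra Psatz.
From Coquelicot Require Import Coquelicot.
Open Scope R_scope.

Lemma key (b y : R) : 0 < b -> b < y ->
  (1 + b) * ln (1 + b) - b * ln b < (1 + b) * ln (1 + y) - b * ln y.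
Proof.
  intros hb hy.
  destruct (MVT_cor2 (fun z => (1 + b) * ln (1 + z) - b * ln z)
             (fun z => (1 + b) * / (1 + z) - b * / z) b y hy) as [c [Hc1 Hc2]].
  { intros c Hc. apply is_derive_Reals.
    auto_derive.
    - lra.
    - field. lra. }
  cbv beta in Hc1.
  assert (0 < ((1 + b) * / (1 + c) - b * / c) * (y - b)).
  { apply Rmult_lt_0_compat; [|lra].
    replace ((1 + b) * / (1 + c) - b * / c) with ((c - b) / (c * (1 + c))) by (field; lra).
    apply Rdiv_lt_0_compat; nra. }
  lra.
Qed.

Theorem lemma3 (r beta : R)
  (hr : 2 < r) (hb0 : 0 < beta) (hb1 : beta < 1)
  (hrb : r ^ 2 < (1 + beta) ^ 2 / beta) :
  / Rpower r (1 + beta) * (Rpower (1 + beta) (1 + beta) / Rpower beta beta)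
    < Rpower (2 / r) (1 + beta) * Rpower (4 / r ^ 2) (- beta)
      * Rpower (sqrt (1 - 4 / r ^ 2) + 1) (beta - 1)
  /\
  Rpower (2 / r) (1 + beta) * Rpower (4 / r ^ 2) (- beta)
      * Rpower (sqrt (1 - 4 / r ^ 2) + 1) (beta - 1)
    = Rpower (r / 2 - sqrt (r ^ 2 / 4 - 1)) (1 - beta).
Proof.
  set (q := sqrt (r ^ 2 / 4 - 1)).
  assert (hq0 : 0 <= q) by apply sqrt_pos.
  assert (hq2 : q * q = r ^ 2 / 4 - 1) by (apply sqrt_sqrt; nra).
  assert (hs : sqrt (1 - 4 / r ^ 2) = 2 * q / r).
  { replace (1 - 4 / r ^ 2) with ((2 * q / r) ^ 2).
    - apply sqrt_pow2. apply Rmult_le_pos; [lra|]. left; apply Rinv_0_lt_compat; lra.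
    - field_simplify_eq; [|lra]. nra. }
  rewrite hs.
  set (x := r / 2 - q).
  assert (hx : 0 < x) by (unfold x; nra).
  assert (hxr : x * (r / 2 + q) = 1) by (unfold x; nra).
  assert (hr' : r = (1 + x * x) / x) by (field_simplify_eq; [unfold x in *; nra | lra]).
  assert (ht : 2 / r = x * (2 * q / r + 1)).
  { field_simplify_eq; [|lra]. unfold x. nra. }
  assert (hpos : 0 < 2 * q / r + 1).
  { assert (0 <= 2 * q / r) by (apply Rmult_le_pos; [lra|left; apply Rinv_0_lt_compat; lra]). lra. }
  assert (Heq : Rpower (2 / r) (1 + beta) * Rpower (4 / r ^ 2) (- beta)
      * Rpower (2 * q / r + 1) (beta - 1) = Rpower x (1 - beta)).
  { unfold Rpower. rewrite <- !exp_plus. f_equal.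
    replace (4 / r ^ 2) with ((2 / r) * (2 / r)) by (field; lra).
    rewrite ln_mult by (apply Rdiv_lt_0_compat; lra).
    rewrite ht. rewrite ln_mult by lra. ring. }
  rewrite Heq. split; [|reflexivity].
  set (y := x * x).
  assert (hy : 0 < y) by (unfold y; nra).
  assert (hby : beta < y).
  { assert (hr2 : r ^ 2 = (1 + y) ^ 2 / y) by (rewrite hr'; unfold y; field; lra).
    rewrite hr2 in hrb.
    apply (Rmult_lt_compat_r (y * beta)) in hrb; [|nra].
    replace ((1 + y) ^ 2 / y * (y * beta)) with ((1 + y) ^ 2 * beta) in hrb by (field; lra).
    replace ((1 + beta) ^ 2 / beta * (y * beta)) with ((1 + beta) ^ 2 * y) in hrb by (field; lra).
    assert (hx1 : x < 1) by (unfold x; nra).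
    assert (y < 1) by (unfold y; nra).
    assert (h1 : 0 < 1 - beta * y) by nra.
    assert (h2 : (beta - y) * (1 - beta * y) < 0) by nra.
    destruct (Rlt_or_le beta y) as [?|hle]; [assumption|].
    assert (0 <= (beta - y) * (1 - beta * y)) by (apply Rmult_le_pos; lra).
    lra. }
  pose proof (key beta y hb0 hby) as K.
  unfold Rpower. unfold Rdiv.
  rewrite <- exp_Ropp, <- exp_Ropp, <- !exp_plus.
  apply exp_increasing.
  assert (hlr : ln r = ln (1 + y) - ln x).
  { rewrite hr'. unfold y. apply ln_div; nra. }
  assert (hly : ln y = ln x + ln x) by (unfold y; apply ln_mult; lra).
  rewrite hlr. rewrite hly in K. lra.
Qed.
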